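(* Let $\mathfrak{C}$ be a clustering functor on $\mathcal{M}^{gen}$ that is scale invariant: for every finite metric space $(X,d_X)$ and every $\lambda>0$, $\mathfrak{C}(X,\lambda\cdot d_X)=\mathfrak{C}(X,d_X)$. Then either $\mathfrak{C}$ assigns to every finite metric space $X$ the partition of $X$ into singletons, or $\mathfrak{C}$ assigns to every finite metric space $X$ the partition with only one block.
   Context: $\mathcal{M}^{gen}$ is the category whose objects are finite metric spaces and whose morphisms $f:(X,d_X)\to(Y,d_Y)$ are distance non-increasing maps. For a set map $f:X\to Y$ and a partition $P_Y$ of $Y$, $f^*(P_Y)$ is the partition of $X$ with blocks the nonempty sets $f^{-1}(B)$, $B\in P_Y$. A clustering functor on $\mathcal{M}^{gen}$ is a rule $\mathfrak{C}$ assigning to every finite metric space $(X,d_X)$ a partition $\mathfrak{C}(X,d_X)$ of $X$ such that for every morphism $f:X\to Y$, $\mathfrak{C}(X)$ refines $f^*(\mathfrak{C}(Y))$. *)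

(* Defs.v *)
From mathcomp Require Import all_boot all_order all_algebra.
From mathcomp Require Import reals.
Set Implicit Arguments. Unset Strict Implicit. Unset Printing Implicit Defensive.
Import Order.TTheory GRing.Theory Num.Theory.
Local Open Scope ring_scope.

Definition is_metric (R : realType) (T : finType) (d : T -> T -> R) : Prop :=
  [/\ forall x y, d x y = 0 <-> x = y,
      forall x y, d x y = d y x
    & forall x y z, d x z <= d x y + d y z].

(* Morphisms of M^gen: distance non-increasing maps. *)
Definition dist_nonincr (R : realType) (T S : finType)
  (dT : T -> T -> R) (dS : S -> S -> R) (f : T -> S) : Prop :=
  forall x y, dS (f x) (f y) <= dT x y.

Definition pullback (T S : finType) (f : T -> S) (P : {set {set S}})
  : {set {set T}} :=
  [set (f @^-1: B : {set T}) | B : {set S} in P] :\ set0.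

Definition refines (T : finType) (P Q : {set {set T}}) : Prop :=
  forall A, A \in P -> exists2 B, B \in Q & A \subset B.

(* A clustering rule: for each finite type T and each function d, a set of
   blocks; only its values on metrics matter. *)
Definition clustering_rule (R : realType) : Type :=
  forall (T : finType), (T -> T -> R) -> {set {set T}}.

Definition is_clustering_functor (R : realType) (C : clustering_rule R) : Prop :=
  (forall (T : finType) (d : T -> T -> R), is_metric d ->
      partition (C T d) [set: T]) /\
  (forall (T S : finType) (dT : T -> T -> R) (dS : S -> S -> R) (f : T -> S),
      is_metric dT -> is_metric dS -> dist_nonincr dT dS f ->
      refines (C T dT) (pullback f (C S dS))).

Definition scale_invariant (R : realType) (C : clustering_rule R) : Prop :=
  forall (T : finType) (d : T -> T -> R) (lam : R), is_metric d -> 0 < lam ->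
    C T (fun x y => lam * d x y) = C T d.

(* The partition into singletons, and the partition with a single block
   (the latter is empty when T is empty). *)
Definition singletons (T : finType) : {set {set T}} := [set [set x] | x : T].
Definition one_block (T : finType) : {set {set T}} := [set [set: T]] :\ set0.

(* Main.v *)
Require Import Defs.
From mathcomp Require Import all_boot all_order all_algebra.
From mathcomp Require Import reals.
From mathcomp Require Import lra.
Import Order.TTheory GRing.Theory Num.Theory.
Local Open Scope ring_scope.

Lemma minpos (R : realType) (T : finType) (d : T -> T -> R) :
  (forall a b, a != b -> 0 < d a b) ->
  exists2 m : R, 0 < m & forall a b, a != b -> m <= d a b.
Proof.
move=> hp.
exists (\big[Order.min/1]_(p : T * T | p.1 != p.2) d p.1 p.2).
  apply: (big_ind (fun v : R => 0 < v)) => //.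
    by move=> u v hu hv; rewrite lt_min hu hv.
  by move=> [a b] /= /hp.
move=> a b hab.
rewrite (bigD1 (a, b)) //=.
by rewrite ge_min lexx.
Qed.

Definition d1 (R : realType) (x y : bool) : R := (x != y)%:R.
Definition tp {R : realType} (del : R) (x y : bool) : R := del * d1 R x y.

Lemma tp_metric {R : realType} {del : R} : 0 < del -> is_metric (tp del).
Proof.
move=> hd; rewrite /tp /d1; split.
- move=> x y; split.
    by case: x; case: y => //=; rewrite mulr1 => h; move: hd; rewrite h ltxx.
  by move=> ->; rewrite eqxx mulr0.
- by move=> x y; rewrite eq_sym.
- by move=> x y z; case: x; case: y; case: z => /=;
     rewrite ?mulr0 ?mulr1 ?addr0 ?add0r //; lra.
Qed.

Lemma d1_metric (R : realType) : is_metric (d1 R).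
Proof.
rewrite /d1; split.
- move=> x y; split.
    by case: x; case: y => //= /eqP; rewrite oner_eq0.
  by move=> ->; rewrite eqxx.
- by move=> x y; rewrite eq_sym.
- by move=> x y z; case: x; case: y; case: z => /=;
     rewrite ?addr0 ?add0r //; lra.
Qed.

Lemma met_nonneg {R : realType} {T : finType} {d : T -> T -> R} {x y} :
  is_metric d -> 0 <= d x y.
Proof.
move=> [h0 hs ht]; have := ht x y x; rewrite (hs y x) (proj2 (h0 x x) erefl).
lra.
Qed.

Lemma met_pos {R : realType} {T : finType} {d : T -> T -> R} {x y} :
  is_metric d -> x != y -> 0 < d x y.
Proof.
move=> hm hxy; rewrite lt_def (met_nonneg hm) andbT.
case: hm => h0 _ _; apply/eqP => /(proj1 (h0 x y)) e; by rewrite e eqxx in hxy.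
Qed.

Lemma push (R : realType) (C : clustering_rule R) (T S : finType)
  (dT : T -> T -> R) (dS : S -> S -> R) (f : T -> S) x y :
  is_clustering_functor C -> is_metric dT -> is_metric dS ->
  dist_nonincr dT dS f ->
  (exists2 A, A \in C T dT & x \in A /\ y \in A) ->
  exists2 B, B \in C S dS & f x \in B /\ f y \in B.
Proof.
move=> [_ HF] mT mS hf [A hA [hx hy]].
have [B hB sAB] := HF _ _ _ _ _ mT mS hf A hA.
move: hB; rewrite /pullback in_setD1 => /andP[_ /imsetP[B' hB' eB]].
exists B' => //; subst B.
by have := subsetP sAB x hx; have := subsetP sAB y hy; rewrite !inE.
Qed.

Lemma partP {T : finType} {P : {set {set T}}} :
  partition P [set: T] ->
  [/\ forall x, pblock P x \in P, forall x, x \in pblock P x,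
      forall A x, A \in P -> x \in A -> pblock P x = A
    & set0 \notin P].
Proof.
move=> /and3P[/eqP hc ht h0]; split => //.
- by move=> x; rewrite pblock_mem // hc inE.
- by move=> x; rewrite mem_pblock hc inE.
- by move=> A x hA hx; apply: def_pblock.
Qed.

Theorem mainTheorem6 (R : realType) (C : clustering_rule R) :
  is_clustering_functor C -> scale_invariant C ->
  (forall (T : finType) (d : T -> T -> R), is_metric d -> C T d = singletons T)
  \/
  (forall (T : finType) (d : T -> T -> R), is_metric d -> C T d = one_block T).
Proof.
move=> HC HS.
have HSb : forall del : R, 0 < del -> C bool (tp del) = C bool (d1 R).
  by move=> del hd; exact: (HS bool (d1 R) del (d1_metric R) hd).
case: (boolP [exists B in C bool (d1 R), (true \in B) && (false \in B)]) => Hb.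
- right => T d hm.
  have [hpm hmp hdef h0] := partP (HC.1 T d hm : partition (C T d) [set: T]).
  have tog : forall x y : T, exists2 A, A \in C T d & x \in A /\ y \in A.
    move=> x y; case: (eqVneq x y) => [<-|nxy].
      by exists (pblock (C T d) x).
    have hd := met_pos hm nxy.
    have := @push R C bool T (tp (d x y)) d (fun b => if b then x else y)
      true false HC (tp_metric hd) hm.
    apply.
      case: hm => hz hs _.
      move=> a b; rewrite /tp /d1; case: a; case: b => /=;
        rewrite ?mulr0 ?mulr1 ?(proj2 (hz _ _) erefl) //.
      by rewrite hs.
    rewrite HSb //; move/existsP: Hb => [B /andP[hB /andP[ht hf]]].
    by exists B.
  have allT : forall A z, A \in C T d -> z \in A -> A = setT.
    move=> A z hA hz; apply/setP => y; rewrite inE.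
    have [D hD [hzD hyD]] := tog z y.
    by rewrite -(hdef A z hA hz) (hdef D z hD hzD).
  apply/setP => A; rewrite /one_block in_setD1 in_set1.
  apply/idP/idP.
    move=> hA.
    have n0 : A != set0 by apply: contraNneq h0 => <-.
    have [z hz] := set0Pn _ n0.
    by rewrite n0 (allT A z hA hz) eqxx.
  move=> /andP[n0 /eqP eA]; subst A.
  have [z _] := set0Pn _ n0.
  by rewrite -(allT _ z (hpm z) (hmp z)).
- left => T d hm.
  have [hpm hmp hdef h0] := partP (HC.1 T d hm : partition (C T d) [set: T]).
  have sep : forall x y : T, forall A, A \in C T d -> x \in A -> y \in A -> x = y.
    move=> x y A hA hx hy; apply/eqP; apply: contraNT Hb => nxy.
    have [m hm0 hmin] := @minpos R T d (fun a b => @met_pos R T d a b hm).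
    have := @push R C T bool d (tp m) (fun z => z == x) x y HC hm (tp_metric hm0).
    case.
    + move=> a b; rewrite /tp /d1; case: (eqVneq a b) => [->|nab].
        by rewrite eqxx mulr0 (met_nonneg hm).
      case: ((a == x) != (b == x)); rewrite ?mulr0 ?mulr1 ?(met_nonneg hm) //.
      exact: hmin.
    + by exists A.
    + rewrite HSb // eqxx => B hB [ht hf]; apply/existsP; exists B.
      by rewrite hB ht /=; move: hf; rewrite eq_sym (negbTE nxy).
  have sing : forall A z, A \in C T d -> z \in A -> A = [set z].
    move=> A z hA hz; apply/setP => y; rewrite inE.
    apply/idP/eqP => [hy|->//]; exact: sep y z A hA hy hz.
  apply/setP => A; rewrite /singletons; apply/idP/imsetP.
    move=> hA.
    have n0 : A != set0 by apply: contraNneq h0 => <-.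
    have [z hz] := set0Pn _ n0.
    by exists z => //; rewrite (sing A z hA hz).
  by move=> [z _ ->]; rewrite -(sing _ z (hpm z) (hmp z)).
Qed.
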